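(* Let $c \geq 1$ and $t$ be integers, let $G$ be a graph of matching width at least $t$, and let $Z$ be a $c$-NSOBDD computing $CNF(G)$. Then $|Z| \geq 2^{t/(2c-1)}$.
   Context: For a graph $G$, the CNF $CNF(G)$ has a variable $X_u$ for each vertex $u$ and a variable $X_{u,v}=X_{v,u}$ for each edge $\{u,v\}$; its clauses are $(X_u \vee X_{u,v} \vee X_v)$ for each edge $\{u,v\}$. Matching width: for a permutation $SV$ of $V(G)$ and a prefix $S_1$ of $SV$, the matching width of $S_1$ is the maximum size of a matching consisting of edges between $S_1$ and $V(G)\setminus S_1$; the matching width of $SV$ is the maximum over its prefixes; the matching width of $G$ is the minimum over all permutations $SV$ of $V(G)$. A non-deterministic branching program is a directed acyclic graph with one root and one leaf, some of whose edges are labelled by literals of variables. A path is consistent if it does not contain two edges labelled by opposite literals of the same variable; a consistent root-leaf path is a computational path. The program computes $F$: an assignment $S$ (as a set of literals) satisfies $F$ iff some computational path has all its labels in $S$. A $c$-NSOBDD is such a program for which there is a permutation $SV$ of its variables such that every computational path $P$ can be written as $P=P_1+\dots+P_c$ (concatenation of subpaths) where on each $P_i$ each variable occurs at most once and the labels along $P_i$ are ordered according to $SV$. $|Z|$ denotes the number of nodes of $Z$. *)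

(* Defs.v *)
From Stdlib Require Import Reals ZArith.
From mathcomp Require Import all_boot fingroup perm.
Set Implicit Arguments. Unset Strict Implicit. Unset Printing Implicit Defensive.

(* Edges {u,v} of G, as unordered pairs (so X_{u,v} = X_{v,u}). *)
Definition is_edge (V : finType) (E : rel V) (s : {set V}) : bool :=
  [exists u, exists v, E u v && (s == [set u; v])].
Definition edgeT (V : finType) (E : rel V) := {s : {set V} | is_edge E s}.

(* Variables of CNF(G): X_u for vertices u, X_{u,v} for edges {u,v}. *)
Definition cnf_var (V : finType) (E : rel V) : finType := (V + edgeT E)%type.

Definition edge_var (V : finType) (E : rel V) (u v : V) (h : E u v) : cnf_var E.
Proof.
  refine (inr (exist _ [set u; v] _)).
  apply/existsP; exists u; apply/existsP; exists v; by rewrite h eqxx.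
Defined.

Definition CNF (V : finType) (E : rel V) (a : cnf_var E -> bool) : Prop :=
  forall (u v : V) (h : E u v), [|| a (inl u), a (edge_var h) | a (inl v)].

Definition crossing_matching (V : finType) (E : rel V) (S1 : {set V})
    (M : {set V * V}) : bool :=
  [forall p in M, [&& E p.1 p.2, p.1 \in S1 & p.2 \notin S1]] &&
  [forall p in M, forall q in M, (p != q) ==> (p.1 != q.1) && (p.2 != q.2)].

Definition mw_prefix (V : finType) (E : rel V) (S1 : {set V}) : nat :=
  \max_(M : {set V * V} | crossing_matching E S1 M) #|M|.

Definition mw_perm (V : finType) (E : rel V) (SV : seq V) : nat :=
  \max_(i < #|V|.+1) mw_prefix E [set x in take i SV].

(* matching width of G: minimum over all permutations of V(G)
   (the index type {perm V} is never empty, so the unit #|V| is irrelevant) *)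
Definition matching_width (V : finType) (E : rel V) : nat :=
  \big[minn/#|V|]_(s : {perm V}) mw_perm E [seq s x | x <- enum V].

(* Nodes N; an arc is (source, target, optional literal label);
   a literal is (x, b): b = true is the positive literal x, b = false is ~x. *)
Definition bp_arc (N X : Type) := (N * N * option (X * bool))%type.

Fixpoint is_walk (N X : eqType) (u : N) (p : seq (bp_arc N X)) (v : N) : bool :=
  if p is a :: p' then (a.1.1 == u) && is_walk a.1.2 p' v else u == v.

Definition labels (N X : Type) (p : seq (bp_arc N X)) : seq (X * bool) :=
  pmap (fun a => a.2) p.

Definition is_BP (N X : finType) (root leaf : N) (A : seq (bp_arc N X)) : Prop :=
  [/\ (forall (u : N) (p : seq (bp_arc N X)),
         p != [::] -> all (mem A) p -> ~~ is_walk u p u),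
      all (fun a => a.1.2 != root) A,
      all (fun a => a.1.1 != leaf) A,
      (forall n : N, n != root -> has (fun a => a.1.2 == n) A) &
      (forall n : N, n != leaf -> has (fun a => a.1.1 == n) A)].

Definition consistent (N X : eqType) (p : seq (bp_arc N X)) : bool :=
  all (fun l => (l.1, ~~ l.2) \notin labels p) (labels p).

Definition comp_path (N X : finType) (root leaf : N) (A : seq (bp_arc N X))
    (p : seq (bp_arc N X)) : bool :=
  [&& all (mem A) p, is_walk root p leaf & consistent p].

Definition computes (N X : finType) (root leaf : N) (A : seq (bp_arc N X))
    (F : (X -> bool) -> Prop) : Prop :=
  forall a : X -> bool,
    F a <-> exists p, comp_path root leaf A p /\
                      all (fun l => a l.1 == l.2) (labels p).

(* c-NSOBDD: there is a permutation SV of the variables such that every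
   computational path splits into c consecutive subpaths, along each of which
   every variable occurs at most once and labels follow the order SV
   (i.e. the SV-positions of the labelled variables strictly increase). *)
Definition c_NSOBDD (N X : finType) (c : nat) (root leaf : N)
    (A : seq (bp_arc N X)) : Prop :=
  exists SV : seq X, perm_eq SV (enum X) /\
    forall p, comp_path root leaf A p ->
      exists ps : seq (seq (bp_arc N X)),
        [/\ size ps = c, flatten ps = p &
            all (fun q => sorted ltn [seq index l.1 SV | l <- labels q]) ps].

(* Main.v *)
Require Import Defs.
From Stdlib Require Import Reals ZArith ClassicalEpsilon Lia Lra.
From mathcomp Require Import all_boot fingroup perm zify.
Set Implicit Arguments. Unset Strict Implicit. Unset Printing Implicit Defensive.

Fixpoint endw (N X : eqType) (u : N) (p : seq (bp_arc N X)) : N :=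
  if p is a :: p' then endw a.1.2 p' else u.

Lemma is_walk_end (N X : eqType) (u : N) p (v : N) :
  @is_walk N X u p v -> endw u p = v.
Proof. elim: p u => [|a p IH] u /=; first by move/eqP. by case/andP=> _ /IH. Qed.

Lemma is_walk_cat (N X : eqType) (u : N) p q (w : N) :
  @is_walk N X u (p ++ q) w = is_walk u p (endw u p) && is_walk (endw u p) q w.
Proof. elim: p u => [|a p IH] u /=; first by rewrite eqxx. by rewrite IH andbA. Qed.

Fixpoint swalk (N X : eqType) (u : N) (ss : seq (seq (bp_arc N X))) (ns : seq N) (v : N) : bool :=
  match ss, ns with
  | [::], [::] => u == v
  | s :: ss', n :: ns' => is_walk u s n && swalk n ss' ns' v
  | _, _ => false
  end.

Fixpoint junc (N X : eqType) (u : N) (ss : seq (seq (bp_arc N X))) : seq N :=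
  if ss is s :: ss' then endw u s :: junc (endw u s) ss' else [::].

Lemma swalk_flatten (N X : eqType) (u : N) ss (v : N) :
  @is_walk N X u (flatten ss) v -> swalk u ss (junc u ss) v.
Proof.
elim: ss u => [|s ss IH] u /=; first by [].
by rewrite is_walk_cat => /andP[-> /IH].
Qed.

Lemma flatten_swalk (N X : eqType) (u : N) ss ns (v : N) :
  @swalk N X u ss ns v -> is_walk u (flatten ss) v.
Proof.
elim: ss ns u => [|s ss IH] [|n ns] u //= /andP[h1 h2].
rewrite is_walk_cat (is_walk_end h1) h1 /=; exact: IH h2.
Qed.

Lemma swalk_last (N X : eqType) (u : N) ss ns (v : N) :
  @swalk N X u ss ns v -> last u ns = v.
Proof.
elim: ss ns u => [|s ss IH] [|n ns] u //=; first by move/eqP.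
by case/andP=> _ /IH.
Qed.

Lemma swalk_size (N X : eqType) (u : N) ss ns (v : N) :
  @swalk N X u ss ns v -> size ns = size ss.
Proof.
by elim: ss ns u => [|s ss IH] [|n ns] u //= /andP[_ /IH] ->.
Qed.

Fixpoint mixs (T : Type) (b : bool) (ss ss' : seq T) : seq T :=
  match ss, ss' with
  | s :: r, s' :: r' => (if b then s' else s) :: mixs (~~ b) r r'
  | _, _ => [::]
  end.

Lemma swalk_mix (N X : eqType) b (u : N) ss ss' ns (v : N) :
  @swalk N X u ss ns v -> swalk u ss' ns v -> swalk u (mixs b ss ss') ns v.
Proof.
elim: ss ss' ns u b => [|s ss IH] [|s' ss'] [|n ns] u b //=.
move=> /andP[h1 h2] /andP[h1' h2']; rewrite (IH _ _ _ _ h2 h2') andbT.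
by case: b.
Qed.


Lemma labels_cat (N X : Type) (p q : seq (bp_arc N X)) :
  labels (p ++ q) = labels p ++ labels q.
Proof. by rewrite /labels pmap_cat. Qed.

Fixpoint alt (N X : Type) (lw : pred X) (b : bool) (ss : seq (seq (bp_arc N X))) : bool :=
  if ss is s :: r then
    all (fun l => if b then ~~ lw l.1 else lw l.1) (labels s) && alt lw (~~ b) r
  else true.

Lemma mix_good (N X : eqType) (lw : pred X) (aT aT' : X -> bool) b
   (ss ss' : seq (seq (bp_arc N X))) :
  alt lw b ss -> alt lw b ss' ->
  all (fun l => aT l.1 == l.2) (labels (flatten ss)) ->
  all (fun l => aT' l.1 == l.2) (labels (flatten ss')) ->
  all (fun l => (if lw l.1 then aT l.1 else aT' l.1) == l.2)
      (labels (flatten (mixs b ss ss'))).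
Proof.
elim: ss ss' b => [|s ss IH] [|s' ss'] b //=.
rewrite !labels_cat !all_cat => /andP[h1 h2] /andP[h1' h2'] /andP[g1 g2] /andP[g1' g2'].
rewrite (IH _ _ h2 h2' g2 g2') andbT.
clear h2 h2' g2 g2'; case: b h1 h1' => h1 h1'.
- apply/allP=> l hl; have := allP h1' l hl; have := allP g1' l hl.
  by move=> /eqP <- /negbTE ->.
- apply/allP=> l hl; have := allP h1 l hl; have := allP g1 l hl.
  by move=> /eqP <- ->.
Qed.

Lemma mix_mem (N X : eqType) (A : seq (bp_arc N X)) b ss ss' :
  all (mem A) (flatten ss) -> all (mem A) (flatten ss') ->
  all (mem A) (flatten (mixs b ss ss')).
Proof.
elim: ss ss' b => [|s ss IH] [|s' ss'] b //=.
rewrite !all_cat => /andP[h1 h2] /andP[h1' h2'].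
by rewrite (IH _ _ h2 h2') andbT; case: b.
Qed.

Lemma good_consistent (N X : eqType) (a : X -> bool) (p : seq (bp_arc N X)) :
  all (fun l => a l.1 == l.2) (labels p) -> consistent p.
Proof.
move=> h; apply/allP=> l hl; apply/negP=> hn.
have := allP h l hl; have := allP h _ hn => /= /eqP -> /eqP.
by case: (l.2).
Qed.

Lemma split_piece (N X : eqType) (SV : seq X) (lw : pred X)
  (down : forall x y, index x SV <= index y SV -> lw y -> lw x)
  (q : seq (bp_arc N X)) :
  sorted ltn [seq index l.1 SV | l <- labels q] ->
  exists ql qh, [/\ q = ql ++ qh, all (fun l => lw l.1) (labels ql) &
                    all (fun l => ~~ lw l.1) (labels qh)].
Proof.
elim: q => [|a q IH]; first by move=> _; exists [::], [::].
rewrite /labels /=; case E: a.2 => [l|] /=; last first.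
  move/IH=> [ql [qh [-> h1 h2]]]; exists (a :: ql), qh.
  by rewrite /labels /= E.
move=> hs; have hs' := path_sorted hs.
have [ql [qh [eq h1 h2]]] := IH hs'.
case hl: (lw l.1).
  exists (a :: ql), qh; split => //; first by rewrite eq.
  by rewrite /labels /= E /= hl.
exists [::], (a :: q); split => //.
rewrite /labels /= E /= hl /=.
have := order_path_min ltn_trans hs.
rewrite all_map => /allP hall; apply/allP => l' hl'.
apply/negP => hl1; move: hl; rewrite (down l.1 l'.1) //.
by apply: ltnW; exact: (hall l' hl').
Qed.

Lemma split_all (N X : eqType) (SV : seq X) (lw : pred X)
  (down : forall x y, index x SV <= index y SV -> lw y -> lw x)
  (ps : seq (seq (bp_arc N X))) :
  all (fun q => sorted ltn [seq index l.1 SV | l <- labels q]) ps ->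
  exists ss, [/\ flatten ss = flatten ps, size ss = (2 * size ps)%N & alt lw false ss].
Proof.
elim: ps => [|q ps IH] /=; first by move=> _; exists [::].
case/andP=> /(split_piece down) [ql [qh [-> h1 h2]]] /IH [ss [e1 e2 e3]].
exists [:: ql, qh & ss]; split => /=.
- by rewrite e1 catA.
- by rewrite e2 mulnS.
- by rewrite h1 h2 e3.
Qed.


Lemma bigmin_le_seq (I : eqType) (r : seq I) (F : I -> nat) x i :
  i \in r -> \big[minn/x]_(j <- r) F j <= F i.
Proof.
elim: r => [|a r IH] //; rewrite in_cons big_cons => /orP[/eqP -> | h].
  exact: geq_minl.
exact: leq_trans (geq_minr _ _) (IH h).
Qed.

Lemma mw_le_perm (V : finType) (E : rel V) (vs : seq V) :
  perm_eq vs (enum V) -> matching_width E <= mw_perm E vs.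
Proof.
move=> hp.
have hu : uniq vs by rewrite (perm_uniq hp) enum_uniq.
have hsz : size vs = size (enum V) by apply: perm_size.
pose f := fun x => nth x vs (index x (enum V)).
have finj : injective f.
  move=> x y; rewrite /f => h.
  have hx : index x (enum V) < size vs by rewrite hsz index_mem mem_enum.
  have hy : index y (enum V) < size vs by rewrite hsz index_mem mem_enum.
  have := h; rewrite (set_nth_default x y hy) => h'.
  move/eqP: h'; rewrite nth_uniq // => /eqP h2.
  by rewrite -(nth_index x (mem_enum V x)) h2 nth_index ?mem_enum.
have hmap : [seq perm finj x | x <- enum V] = vs.
  case hv: vs => [|x0 r].
    by move: hsz; rewrite hv => /esym/size0nil ->.
  rewrite -hv; apply: (eq_from_nth (x0:=x0)); first by rewrite size_map hsz.
  move=> i; rewrite size_map => hi.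
  rewrite (nth_map x0) // permE /f index_uniq ?enum_uniq //.
  by apply: set_nth_default; rewrite hsz.
rewrite /matching_width -hmap.
exact: bigmin_le_seq (mem_index_enum _).
Qed.

Lemma order_setup (V : finType) (E : rel V) (SV : seq (cnf_var E)) :
  perm_eq SV (enum (cnf_var E)) ->
  exists (S1 : {set V}) (M : {set V * V}),
   [/\ crossing_matching E S1 M, matching_width E <= #|M| &
     forall w w', index (inl w) SV <= index (inl w') SV -> w' \in S1 -> w \in S1].
Proof.
move=> hSV.
pose kle := fun w w' : V => index (inl w : cnf_var E) SV <= index (inl w' : cnf_var E) SV.
have ktot : total kle by move=> x y; exact: leq_total.
have ktr : transitive kle by move=> x y z; exact: leq_trans.
pose vs := sort kle (enum V).
have hp : perm_eq vs (enum V) by rewrite perm_sort.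
have hmw := mw_le_perm E hp.
have [i0 hi0] := @eq_bigmax _ (fun i : 'I_#|V|.+1 => mw_prefix E [set x in take i vs]) ltac:(by rewrite card_ord).
have hpos : 0 < #|crossing_matching E [set x in take i0 vs]|.
  apply/card_gt0P; exists set0; rewrite unfold_in /crossing_matching.
  by apply/andP; split; apply/forallP=> p; rewrite in_set0.
have [M hM hM2] := @eq_bigmax_cond _ (crossing_matching E [set x in take i0 vs]) (fun M => #|M|) hpos.
exists [set x in take i0 vs], M; split => //.
  apply: leq_trans hmw _; rewrite /mw_perm hi0 /mw_prefix -hM2.
  by apply: eq_leq; apply: eq_bigl => x; rewrite unfold_in.
move=> w w' hle; rewrite !inE => hw'.
have hvs : w \in vs by rewrite (perm_mem hp) mem_enum.
case hw: (w \in take i0 vs) => //.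
have hwd : w \in drop i0 vs.
  by move: hvs; rewrite -{1}(cat_take_drop i0 vs) mem_cat hw.
have := sort_sorted ktot (enum V); rewrite -/vs (sorted_pairwise ktr).
rewrite -(cat_take_drop i0 vs) pairwise_cat => /and3P[/allrelP hr _ _].
have hk := hr _ _ hw' hwd; rewrite /kle in hk.
have heq : index (inl w : cnf_var E) SV = index (inl w' : cnf_var E) SV.
  by apply/eqP; rewrite eqn_leq hle hk.
have hin : forall x : V, (inl x : cnf_var E) \in SV by move=> x; rewrite (perm_mem hSV) mem_enum.
have := index_inj (inl w : cnf_var E) (hin w) (hin w') heq; case=> hww.
by rewrite hww hw' in hw.
Qed.


Definition aT (V : finType) (E : rel V) (S1 : {set V}) (M T : {set V * V})
  (x : cnf_var E) : bool :=
  match x with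
  | inl w => if w \in S1 then [exists q in M, (q \in T) && (q.1 == w)]
             else ~~ [exists q in M, (q \in T) && (q.2 == w)]
  | inr e => ~~ [exists q in M, val e == [set q.1; q.2]]
  end.

Lemma cross_prop (V : finType) (E : rel V) (S1 : {set V}) (M : {set V * V}) :
  crossing_matching E S1 M ->
  (forall p, p \in M -> [/\ E p.1 p.2, p.1 \in S1 & p.2 \notin S1]) /\
  (forall p q, p \in M -> q \in M -> p != q -> (p.1 != q.1) && (p.2 != q.2)).
Proof.
case/andP=> /forallP h1 /forallP h2; split.
  by move=> p hp; have := h1 p; rewrite hp /= => /and3P.
move=> p q hp hq; have := h2 p; rewrite hp /= => /forallP /(_ q); rewrite hq /=.
by move/implyP.
Qed.

Lemma aT1 (V : finType) (E : rel V) (S1 : {set V}) (M T : {set V * V}) p :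
  crossing_matching E S1 M -> p \in M -> @aT V E S1 M T (inl p.1) = (p \in T).
Proof.
move=> /cross_prop [hc hm] hp; have [_ h1 _] := hc p hp; rewrite /= h1.
apply/existsP/idP => [[q /andP[hq /andP[hqT /eqP e]]]|hpT].
  case: (eqVneq q p) => [<- //|hne]; have := hm q p hq hp hne.
  by rewrite e eqxx.
by exists p; rewrite hp hpT eqxx.
Qed.

Lemma aT2 (V : finType) (E : rel V) (S1 : {set V}) (M T : {set V * V}) p :
  crossing_matching E S1 M -> p \in M -> @aT V E S1 M T (inl p.2) = ~~ (p \in T).
Proof.
move=> /cross_prop [hc hm] hp; have [_ _ h1] := hc p hp; rewrite /= (negbTE h1).
congr negb.
apply/existsP/idP => [[q /andP[hq /andP[hqT /eqP e]]]|hpT].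
  case: (eqVneq q p) => [<- //|hne]; have := hm q p hq hp hne.
  by rewrite e eqxx andbF.
by exists p; rewrite hp hpT eqxx.
Qed.

Lemma aT_CNF (V : finType) (E : rel V) (S1 : {set V}) (M T : {set V * V}) :
  crossing_matching E S1 M -> CNF (@aT V E S1 M T).
Proof.
move=> hcr u v h.
have [hc hm] := cross_prop hcr.
case he: (aT S1 M T (edge_var h)); first by rewrite orbT.
have hex : [exists q in M, [set u; v] == [set q.1; q.2]].
  by move: he; rewrite /edge_var /= => /negbFE.
case/existsP: hex => q /andP [hq /eqP heq].
have [_ hq1 hq2] := hc q hq.
have hu : u \in [set q.1; q.2] by rewrite -heq set21.
have hv : v \in [set q.1; q.2] by rewrite -heq set22.
have hq1' : q.1 \in [set u; v] by rewrite heq set21.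
have hq2' : q.2 \in [set u; v] by rewrite heq set22.
have e1 := aT1 T hcr hq; have e2 := aT2 T hcr hq.
move: hu hv hq1' hq2'; rewrite !inE.
case/orP=> /eqP hu; case/orP=> /eqP hv.
- by move=> _ /orP[] /eqP hqq; rewrite hqq ?hu ?hv hq1 in hq2.
- move=> _ _; have -> : @aT V E S1 M T (inl u) = (q \in T) by rewrite hu e1.
  have -> : @aT V E S1 M T (inl v) = ~~ (q \in T) by rewrite hv e2.
  by case: (q \in T); rewrite ?orbT.
- move=> _ _; have -> : @aT V E S1 M T (inl u) = ~~ (q \in T) by rewrite hu e2.
  have -> : @aT V E S1 M T (inl v) = (q \in T) by rewrite hv e1.
  by case: (q \in T); rewrite ?orbT.
- by move=> /orP[] /eqP hqq _; rewrite hqq ?hu ?hv (negbTE hq2) in hq1.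
Qed.

Lemma hybrid_false (V : finType) (E : rel V) (S1 : {set V}) (M T T' : {set V * V})
   (lw : pred (cnf_var E)) p :
  crossing_matching E S1 M -> (forall w, lw (inl w) = (w \in S1)) ->
  p \in M -> p \notin T -> p \in T' ->
  ~ CNF (fun x => if lw x then @aT V E S1 M T x else @aT V E S1 M T' x).
Proof.
move=> hcr hlw hp hT hT' hC.
have [hc _] := cross_prop hcr; have [h h1 h2] := hc p hp.
have := hC p.1 p.2 h.
have e0 : forall TT, @aT V E S1 M TT (edge_var h) = false.
  move=> TT; rewrite /edge_var /=; apply/negbF/existsP; exists p.
  by rewrite hp eqxx.
rewrite !hlw h1 (negbTE h2) (aT1 T hcr hp) (aT2 T' hcr hp) (negbTE hT) hT'.
by case: (lw _); rewrite e0.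
Qed.

Local Open Scope R_scope.

Lemma ln_le' (x y : R) : Rlt 0 x -> Rle x y -> Rle (ln x) (ln y).
Proof.
move=> hx [h|->]; [left; apply: ln_increasing => // | right => //].
Qed.

Lemma exp_le' (x y : R) : Rle x y -> Rle (exp x) (exp y).
Proof. move=> [h|->]; [left; apply: exp_increasing => // | right => //]. Qed.

Lemma expn_pow (a b : nat) : expn a b = Nat.pow a b.
Proof. elim: b => [//|b IH]; rewrite expnS IH //. Qed.

Lemma real_bound (K m n : nat) (t : Z) :
  (0 < m)%N -> (0 < n)%N -> (2 ^ K <= n ^ m)%N -> (t <= Z.of_nat K)%Z ->
  Rle (Rpower 2 (Rdiv (IZR t) (INR m))) (INR n).
Proof.
move=> /ltP hm /ltP hn /leP hK ht.
have hm' : (0 < INR m) by apply: lt_0_INR.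
have hn' : (0 < INR n) by apply: lt_0_INR.
have h1 : (Rpower 2 (IZR t / INR m) <= Rpower 2 (INR K / INR m)).
  apply: Rle_Rpower; first lra.
  rewrite /Rdiv; apply: Rmult_le_compat_r; first by left; apply: Rinv_0_lt_compat.
  rewrite INR_IZR_INZ; exact: IZR_le.
apply: Rle_trans h1 _.
have h2 : (INR K * ln 2 <= INR m * ln (INR n)).
  rewrite -ln_pow; last lra. rewrite -ln_pow //.
  apply: ln_le'; first by apply: pow_lt; lra.
  have := le_INR _ _ hK; rewrite !expn_pow !pow_INR.
  by replace (INR 2) with 2%R by (simpl; lra).
rewrite /Rpower -{1}(exp_ln (INR n) hn'); apply: exp_le'.
have h3 : (INR K / INR m * ln 2 * INR m = INR K * ln 2) by field; lra.
apply: (Rmult_le_reg_r (INR m)) => //; lra.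
Qed.

Local Close Scope R_scope.

Lemma rcons_take (T : Type) (J : seq T) (r l : T) n :
  size J = n.+1 -> last r J = l -> J = rcons (take n J) l.
Proof.
case/lastP: J => [//|J0 x]; rewrite size_rcons last_rcons; case=> hs hx.
by rewrite hx -!cats1 -hs take_size_cat.
Qed.

Unset Implicit Arguments.
Theorem theorem4 (V : finType) (E : rel V)
    (HS : symmetric E) (HI : irreflexive E)
    (c : nat) (t : Z)
    (N : finType) (root leaf : N) (A : seq (bp_arc N (cnf_var E))) :
  (1 <= c)%N ->
  (t <= Z.of_nat (matching_width E))%Z ->
  is_BP root leaf A ->
  c_NSOBDD c root leaf A ->
  computes root leaf A (@CNF V E) ->
  Rle (Rpower 2 (Rdiv (IZR t) (INR (2 * c - 1)))) (INR #|{: N}|).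
Proof.
move=> hc ht hBP [SV [hSV hpaths]] hcomp.
have [S1 [M [hcr hmwM hdown]]] := order_setup hSV.
pose lw := fun x : cnf_var E => [exists w in S1, index x SV <= index (inl w : cnf_var E) SV].
have down : forall x y, index x SV <= index y SV -> lw y -> lw x.
  move=> x y hxy /existsP [w /andP [hw hy]]; apply/existsP; exists w.
  by rewrite hw (leq_trans hxy hy).
have hlw : forall w, lw (inl w) = (w \in S1).
  move=> w; apply/existsP/idP => [[w' /andP [hw' hle]]|hw]; first exact: hdown hle hw'.
  by exists w; rewrite hw leqnn.
pose P := fun T ss => [/\ alt lw false ss, size ss = (2 * c)%N, all (mem A) (flatten ss),
   is_walk root (flatten ss) leaf &
   all (fun l => @aT V E S1 M T l.1 == l.2) (labels (flatten ss))].
have hex : forall T, exists ss, P T ss.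
  move=> T; have [p [hp hgood]] := (hcomp (@aT V E S1 M T)).1 (aT_CNF T hcr).
  have [ps [hsz hfl hsorted]] := hpaths p hp.
  have [ss [e1 e2 e3]] := split_all down hsorted.
  exists ss; move/and3P: hp => [hA hW _]; rewrite /P e1 hfl e2 hsz; split => //.
pose ssf := fun T => proj1_sig (constructive_indefinite_description _ (hex T)).
have hssf : forall T, P T (ssf T).
  by move=> T; rewrite /ssf; case: (constructive_indefinite_description _ _).
pose J := fun T => junc root (ssf T).
have hJ : forall T, swalk root (ssf T) (J T) leaf.
  by move=> T; have [_ _ _ hw _] := hssf T; exact: swalk_flatten.
have hJsz : forall T, size (J T) = (2 * c)%N.
  by move=> T; have [_ hs _ _ _] := hssf T; rewrite (swalk_size (hJ T)).
pose n := (2 * c - 1)%N.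
have hn : (2 * c)%N = n.+1 by rewrite /n; move: hc; clear; case: c => // c _; rewrite mulnS.
have hJl : forall T, J T = rcons (take n (J T)) leaf.
  by move=> T; apply: (rcons_take (r:=root)); [rewrite hJsz | exact: swalk_last (hJ T)].
have key : forall T T', J T = J T' -> T' :&: M \subset T.
  move=> T T' hJJ; apply/subsetP => p; rewrite inE => /andP [hpT' hpM].
  apply/negPn/negP => hpT.
  apply: (hybrid_false (lw:=lw) hcr hlw hpM hpT hpT').
  have [a1 _ m1 w1 g1] := hssf T; have [a2 _ m2 w2 g2] := hssf T'.
  apply/(hcomp _).2; exists (flatten (mixs false (ssf T) (ssf T'))).
  have hg := mix_good a1 a2 g1 g2.
  split => //; apply/and3P; split.
  - exact: mix_mem.
  - apply: flatten_swalk; apply: swalk_mix; first exact: hJ.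
    by rewrite -/(J T) hJJ; exact: hJ.
  - exact: (good_consistent (a:=fun x => if lw x then @aT V E S1 M T x else @aT V E S1 M T' x) hg).
pose t0 := nseq_tuple n root.
pose f := fun T => insubd t0 (take n (J T)).
have hsz : forall T, size (take n (J T)) = n.
  by move=> T; rewrite size_take hJsz hn ltnSn.
have finj : {in powerset M &, injective f}.
  move=> T T' hT hT' hf.
  have ht' : take n (J T) = take n (J T').
    by move/(congr1 val): hf; rewrite /f !val_insubd !hsz eqxx.
  have hJJ : J T = J T' by rewrite hJl ht' -hJl.
  move: hT hT'; rewrite !powersetE => hT hT'.
  apply/eqP; rewrite eqEsubset.
  have := key _ _ (esym hJJ); have := key _ _ hJJ.
  by rewrite (setIidPl hT) (setIidPl hT') => -> ->.
have := @leq_card_in _ _ f _ finj; rewrite card_powerset card_tuple => hle.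
apply: (@real_bound #|M|) => //.
- by rewrite /n; move: hc; clear; lia.
- by apply/card_gt0P; exists root.
- apply: Z.le_trans ht _; apply/Nat2Z.inj_le; exact/leP.
Qed.
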